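(* Let $x_0,\ldots,x_k$ be points of the unit sphere $\mathcal S_n\subset\mathbb R^{n+1}$ ($n\ge1$) with its canonical metric, and $X=[x_0,\ldots,x_k]$ the $(n+1)\times(k+1)$ matrix of their coordinates. Then $x_0,\ldots,x_k$ are affinely independent if and only if $\mathrm{rank}(X)=k+1$.
   Context: On $\mathcal S_n$ with the metric induced by $\mathbb R^{n+1}$, the cut locus of $x$ is $\{-x\}$ and $\log_x(y)=\frac{\theta}{\sin\theta}(y-\cos\theta\,x)$ with $\theta=\arccos(x^\top y)$. Points $x_0,\ldots,x_k$ of a Riemannian manifold are affinely independent if no $x_j$ ($j\neq i$) lies in the cut locus of $x_i$ and, for every $i$, the $k$ vectors $\{\log_{x_i}(x_j)\}_{j\ne i}$ are linearly independent in $T_{x_i}\mathcal S_n$. *)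

(* Defs.v *)
From Stdlib Require Import Reals Lra Lia List.
Open Scope R_scope.

(* Vectors of R^(n+1) are functions nat -> R; only coordinates 0..n matter. *)
Definition dot (n : nat) (u v : nat -> R) : R :=
  sum_f_R0 (fun i => u i * v i) n.

Definition on_sphere (n : nat) (x : nat -> R) : Prop := dot n x x = 1.

(* Cut locus of x on S_n is {-x}. *)
Definition in_cut_locus (n : nat) (x y : nat -> R) : Prop :=
  forall i, (i <= n)%nat -> y i = - x i.

(* Riemannian logarithm on S_n: log_x(y) = theta/sin theta (y - cos theta x),
   theta = arccos(x^T y).  (For y = x both conventions give the zero vector.) *)
Definition sph_log (n : nat) (x y : nat -> R) : nat -> R :=
  let theta := acos (dot n x y) in
  fun i => theta / sin theta * (y i - cos theta * x i).

(* Linear independence of the family (v j)_{j <= k, P j} in R^(n+1)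
   (equivalently in the tangent space, which is a linear subspace). *)
Definition lin_indep (n k : nat) (P : nat -> Prop) (v : nat -> nat -> R) : Prop :=
  forall c : nat -> R,
    (forall j, ~ P j -> c j = 0) ->
    (forall l, (l <= n)%nat -> sum_f_R0 (fun j => c j * v j l) k = 0) ->
    forall j, (j <= k)%nat -> c j = 0.

Definition affinely_independent (n k : nat) (x : nat -> nat -> R) : Prop :=
  (forall i j, (i <= k)%nat -> (j <= k)%nat -> j <> i -> ~ in_cut_locus n (x i) (x j)) /\
  (forall i, (i <= k)%nat ->
     lin_indep n k (fun j => j <> i) (fun j => sph_log n (x i) (x j))).

(* A (n+1) x (k+1) real matrix is a function X : nat -> nat -> R (row, column). *)
Definition col (X : nat -> nat -> R) (j : nat) : nat -> R := fun i => X i j.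

Definition has_rank (n k : nat) (X : nat -> nat -> R) (r : nat) : Prop :=
  (exists S : list nat, length S = r /\ NoDup S /\ (forall j, In j S -> (j <= k)%nat) /\
      lin_indep n k (fun j => In j S) (col X)) /\
  (forall T : list nat, NoDup T -> (forall j, In j T -> (j <= k)%nat) ->
      length T = Datatypes.S r -> ~ lin_indep n k (fun j => In j T) (col X)).

Definition coord_matrix (x : nat -> nat -> R) : nat -> nat -> R :=
  fun i j => x j i.

(* Main.v *)
Require Import Defs.
From Stdlib Require Import Reals Lra Lia List.
Open Scope R_scope.

Lemma sum_zero (f : nat -> R) (k : nat) :
  (forall m, (m <= k)%nat -> f m = 0) -> sum_f_R0 f k = 0.
Proof.
  induction k; intros H; simpl.
  - apply H; lia.
  - rewrite IHk by (intros; apply H; lia). rewrite (H (S k)) by lia. ring.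
Qed.

Lemma sum_delta (g : nat -> R) (k i : nat) : (i <= k)%nat ->
  sum_f_R0 (fun m => if Nat.eq_dec m i then g m else 0) k = g i.
Proof.
  induction k; intros Hi.
  - simpl. destruct (Nat.eq_dec 0 i); [subst; reflexivity | lia].
  - rewrite tech5.
    destruct (Nat.eq_dec (S k) i).
    + subst. rewrite sum_zero. ring.
      intros m Hm. destruct (Nat.eq_dec m (S k)); [lia|reflexivity].
    + rewrite IHk by lia. ring.
Qed.

Lemma sum_lin (a b : R) (f g : nat -> R) (N : nat) :
  sum_f_R0 (fun i => a * f i + b * g i) N = a * sum_f_R0 f N + b * sum_f_R0 g N.
Proof. induction N; simpl; [ring | rewrite IHN; ring]. Qed.

Lemma sum_scal_l (a : R) (f : nat -> R) (N : nat) :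
  a * sum_f_R0 f N = sum_f_R0 (fun i => a * f i) N.
Proof. induction N; simpl; [ring | rewrite <- IHN; ring]. Qed.

Lemma sum_swap (f : nat -> nat -> R) (m N : nat) :
  sum_f_R0 (fun i => sum_f_R0 (fun j => f i j) m) N
  = sum_f_R0 (fun j => sum_f_R0 (fun i => f i j) N) m.
Proof.
  induction N; simpl.
  - reflexivity.
  - rewrite IHN.
    rewrite <- (Rmult_1_l (sum_f_R0 (fun j => sum_f_R0 (fun i => f i j) N) m)).
    rewrite <- (Rmult_1_l (sum_f_R0 (fun j => f (S N) j) m)).
    rewrite <- sum_lin. apply sum_eq. intros; ring.
Qed.

Lemma dot_comb (n : nat) (u v : nat -> R) (s : R) :
  dot n (fun i => u i + s * v i) (fun i => u i + s * v i)
  = dot n u u + 2 * s * dot n u v + s * s * dot n v v.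
Proof. unfold dot; induction n; simpl; [ring | rewrite IHn; ring]. Qed.

Lemma dot_sym (n : nat) (u v : nat -> R) : dot n u v = dot n v u.
Proof. unfold dot; apply sum_eq; intros; ring. Qed.

Lemma sq_nonneg_sum (n : nat) (w : nat -> R) : 0 <= dot n w w.
Proof. unfold dot; induction n; simpl; nra. Qed.

Lemma sq_zero_sum (n : nat) (w : nat -> R) : dot n w w = 0 ->
  forall i, (i <= n)%nat -> w i = 0.
Proof.
  unfold dot; induction n; simpl; intros H i Hi.
  - assert (i = 0%nat) by lia; subst; nra.
  - pose proof (sq_nonneg_sum n w) as P; unfold dot in P.
    assert (w (S n) * w (S n) = 0) by nra.
    assert (sum_f_R0 (fun i => w i * w i) n = 0) by nra.
    destruct (Nat.eq_dec i (S n)); [subst; nra|]. apply IHn; auto; lia.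
Qed.

Lemma unit_facts (n : nat) (u v : nat -> R) : dot n u u = 1 -> dot n v v = 1 ->
  -1 <= dot n u v <= 1 /\
  (dot n u v = 1 -> forall i, (i <= n)%nat -> v i = u i) /\
  (dot n u v = -1 -> forall i, (i <= n)%nat -> v i = - u i).
Proof.
  intros Hu Hv.
  pose proof (dot_comb n u v 1) as C1. pose proof (dot_comb n u v (-1)) as C2.
  pose proof (sq_nonneg_sum n (fun i => u i + 1 * v i)).
  pose proof (sq_nonneg_sum n (fun i => u i + -1 * v i)).
  rewrite Hu, Hv in C1, C2.
  split; [lra|split].
  - intros E i Hi. assert (dot n (fun i => u i + -1 * v i) (fun i => u i + -1 * v i) = 0) by lra.
    pose proof (sq_zero_sum _ _ H1 i Hi). simpl in H2. lra.
  - intros E i Hi. assert (dot n (fun i => u i + 1 * v i) (fun i => u i + 1 * v i) = 0) by lra.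
    pose proof (sq_zero_sum _ _ H1 i Hi). simpl in H2. lra.
Qed.

Definition colind (n k : nat) (x : nat -> nat -> R) : Prop :=
  forall c : nat -> R,
    (forall l, (l <= n)%nat -> sum_f_R0 (fun j => c j * x j l) k = 0) ->
    forall j, (j <= k)%nat -> c j = 0.

Definition coef (d : R) := acos d / sin (acos d).

Lemma log_eq (n : nat) (u v : nat -> R) : dot n u u = 1 -> dot n v v = 1 ->
  forall l, sph_log n u v l = coef (dot n u v) * (v l - dot n u v * u l).
Proof.
  intros Hu Hv l. destruct (unit_facts n u v Hu Hv) as [B _].
  unfold sph_log, coef. rewrite cos_acos by lra. reflexivity.
Qed.

Lemma coef_nz (d : R) : -1 < d < 1 -> coef d <> 0.
Proof.
  intros H. pose proof (acos_bound_lt d H).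
  assert (0 < sin (acos d)) by (apply sin_gt_0; lra).
  unfold coef, Rdiv. apply Rmult_integral_contrapositive_currified; [lra|].
  apply Rinv_neq_0_compat; lra.
Qed.

Lemma rank_iff (n k : nat) (x : nat -> nat -> R) :
  has_rank n k (coord_matrix x) (S k) <-> colind n k x.
Proof.
  split.
  - intros [[L [HL [HN [Hb HI]]]] _] c Hc j Hj.
    assert (Hincl : incl (seq 0 (S k)) L).
    { apply NoDup_length_incl; auto.
      - rewrite length_seq; lia.
      - intros a Ha. apply in_seq. apply Hb in Ha. lia. }
    set (c' := fun j => if Compare_dec.le_dec j k then c j else 0).
    assert (c' j = 0).
    { apply (HI c'); auto.
      - intros m Hm. unfold c'. destruct (Compare_dec.le_dec m k); auto.
        exfalso. apply Hm, Hincl, in_seq. lia.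
      - intros l Hl. rewrite <- (Hc l Hl). apply sum_eq. intros i Hi.
        unfold c', col, coord_matrix. destruct (Compare_dec.le_dec i k); [reflexivity|lia]. }
    unfold c' in H. destruct (Compare_dec.le_dec j k); [auto|lia].
  - intros H. split.
    + exists (seq 0 (S k)). split; [apply length_seq|]. split; [apply seq_NoDup|].
      split. { intros j Hj. apply in_seq in Hj. lia. }
      intros c _ Hc. apply H. exact Hc.
    + intros T HN Hb HL _.
      assert (incl T (seq 0 (S k))) by (intros a Ha; apply in_seq; apply Hb in Ha; lia).
      pose proof (NoDup_incl_length HN H0). rewrite length_seq in H1. lia.
Qed.

Lemma sum_remove (f : nat -> R) (k i : nat) : (i <= k)%nat ->
  sum_f_R0 (fun p => if Nat.eq_dec p i then 0 else f p) k = sum_f_R0 f k - f i.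
Proof.
  intros Hi. rewrite <- (sum_delta f k i Hi).
  replace (sum_f_R0 f k - sum_f_R0 (fun m => if Nat.eq_dec m i then f m else 0) k)
    with (1 * sum_f_R0 f k + (-1) * sum_f_R0 (fun m => if Nat.eq_dec m i then f m else 0) k) by ring.
  rewrite <- sum_lin. apply sum_eq. intros p _. destruct (Nat.eq_dec p i); ring.
Qed.

Lemma colind_no_mult (n k : nat) (x : nat -> nat -> R) (s : R) (i j : nat) :
  colind n k x -> (i <= k)%nat -> (j <= k)%nat -> j <> i -> s <> 0 ->
  ~ (forall l, (l <= n)%nat -> x j l = s * x i l).
Proof.
  intros H Hi Hj Hji Hs Hm.
  set (c := fun m => if Nat.eq_dec m i then s else if Nat.eq_dec m j then -1 else 0).
  assert (Hci : c i = 0).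
  { apply (H c); auto. intros l Hl.
    transitivity (1 * sum_f_R0 (fun m => if Nat.eq_dec m i then s * x m l else 0) k
      + (-1) * sum_f_R0 (fun m => if Nat.eq_dec m j then x m l else 0) k).
    - rewrite <- sum_lin. apply sum_eq. intros p _. unfold c.
      destruct (Nat.eq_dec p i); destruct (Nat.eq_dec p j); subst; try lia; ring.
    - rewrite (sum_delta (fun m => s * x m l)) by auto.
      rewrite (sum_delta (fun m => x m l)) by auto. rewrite Hm by auto. ring. }
  unfold c in Hci. destruct (Nat.eq_dec i i); [lra|congruence].
Qed.

Lemma colind_bounds (n k : nat) (x : nat -> nat -> R) :
  (forall j, (j <= k)%nat -> on_sphere n (x j)) ->
  colind n k x -> forall i j, (i <= k)%nat -> (j <= k)%nat -> j <> i ->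
  -1 < dot n (x i) (x j) < 1.
Proof.
  intros hx H i j Hi Hj Hji.
  destruct (unit_facts n (x i) (x j) (hx i Hi) (hx j Hj)) as [B [E1 E2]].
  split.
  - destruct (Req_dec (dot n (x i) (x j)) (-1)) as [E|E]; [|lra].
    exfalso. apply (colind_no_mult n k x (-1) i j H Hi Hj Hji ltac:(lra)).
    intros l Hl. rewrite (E2 E l Hl). ring.
  - destruct (Req_dec (dot n (x i) (x j)) 1) as [E|E]; [|lra].
    exfalso. apply (colind_no_mult n k x 1 i j H Hi Hj Hji ltac:(lra)).
    intros l Hl. rewrite (E1 E l Hl). ring.
Qed.

Theorem mainTheorem4 (n k : nat) (x : nat -> nat -> R)
  (hn : (1 <= n)%nat)
  (hx : forall j, (j <= k)%nat -> on_sphere n (x j)) :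
  affinely_independent n k x <-> has_rank n k (coord_matrix x) (S k).
Proof.
  rewrite rank_iff. split.
  - intros [Hcut Hlog] c Hc.
    specialize (Hlog 0%nat ltac:(lia)).
    set (d := fun p => dot n (x 0%nat) (x p)).
    assert (Hb : forall m, (m <= k)%nat -> m <> 0%nat -> -1 < d m < 1).
    { intros m Hm Hm0.
      destruct (unit_facts n (x 0%nat) (x m) (hx 0%nat ltac:(lia)) (hx m Hm)) as [B [E1 E2]].
      fold (d m) in B, E1, E2. split.
      - destruct (Req_dec (d m) (-1)) as [E|E]; [|lra].
        exfalso. apply (Hcut 0%nat m ltac:(lia) Hm Hm0). intros l Hl. apply E2; auto.
      - destruct (Req_dec (d m) 1) as [E|E]; [|lra]. exfalso.
        assert (Z : forall l, sph_log n (x 0%nat) (x m) l = 0).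
        { intros l. rewrite log_eq by (apply hx; lia). fold (d m). rewrite E.
          unfold coef. rewrite acos_1. unfold Rdiv. ring. }
        set (c'' := fun p => if Nat.eq_dec p m then 1 else 0).
        assert (Hcm : c'' m = 0).
        { apply (Hlog c''); auto.
          - intros p Hp. unfold c''. destruct (Nat.eq_dec p m); [lia|auto].
          - intros l Hl. rewrite <- (sum_delta (fun p => 0) k m Hm).
            apply sum_eq. intros p _. unfold c''. destruct (Nat.eq_dec p m).
            + subst. rewrite Z. ring.
            + ring. }
        unfold c'' in Hcm. destruct (Nat.eq_dec m m); [lra|congruence]. }
    set (a := fun p => coef (d p)).
    assert (Ha : forall m, (m <= k)%nat -> m <> 0%nat -> a m <> 0).
    { intros m Hm Hm0. apply coef_nz. apply Hb; auto. }
    set (c0 := fun p => if Nat.eq_dec p 0 then 0 else c p).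
    assert (Hd0 : d 0%nat = 1) by (apply hx; lia).
    assert (Hcd : sum_f_R0 (fun p => c p * d p) k = 0).
    { transitivity (sum_f_R0 (fun p => sum_f_R0 (fun l => x 0%nat l * (c p * x p l)) n) k).
      - apply sum_eq. intros p _. unfold d, dot. rewrite sum_scal_l. apply sum_eq.
        intros; ring.
      - rewrite (sum_swap (fun p l => x 0%nat l * (c p * x p l))).
        apply sum_zero. intros l Hl. rewrite <- sum_scal_l. rewrite Hc by auto. ring. }
    assert (Hc0d : sum_f_R0 (fun p => c0 p * d p) k = - c 0%nat).
    { unfold c0. transitivity (sum_f_R0 (fun p => if Nat.eq_dec p 0 then 0 else c p * d p) k).
      - apply sum_eq. intros p _. destruct (Nat.eq_dec p 0); ring.
      - rewrite sum_remove by lia. rewrite Hcd, Hd0. ring. }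
    set (e := fun p => if Nat.eq_dec p 0 then 0 else c p / a p).
    assert (He : forall j, (j <= k)%nat -> e j = 0).
    { apply Hlog.
      - intros p Hp. unfold e. destruct (Nat.eq_dec p 0); [reflexivity|lia].
      - intros l Hl.
        transitivity (1 * sum_f_R0 (fun p => if Nat.eq_dec p 0 then 0 else c p * x p l) k
          + (- x 0%nat l) * sum_f_R0 (fun p => c0 p * d p) k).
        + rewrite <- sum_lin. apply sum_eq. intros p Hp.
          rewrite log_eq by (apply hx; lia). fold (d p). fold (a p).
          unfold e, c0. destruct (Nat.eq_dec p 0).
          * ring.
          * field. apply Ha; auto.
        + rewrite sum_remove by lia. rewrite Hc by auto. rewrite Hc0d. ring. }
    assert (Hnz : forall j, (j <= k)%nat -> j <> 0%nat -> c j = 0).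
    { intros j Hj Hj0. pose proof (He j Hj) as E. unfold e in E.
      destruct (Nat.eq_dec j 0); [lia|].
      pose proof (Ha j Hj Hj0). unfold Rdiv in E.
      apply Rmult_integral in E. destruct E as [E|E]; auto.
      exfalso. revert E. apply Rinv_neq_0_compat; auto. }
    intros j Hj. destruct (Nat.eq_dec j 0).
    + subst. assert (sum_f_R0 (fun p => c0 p * d p) k = 0).
      { apply sum_zero. intros p Hp. unfold c0. destruct (Nat.eq_dec p 0); [ring|].
        rewrite Hnz by auto. ring. }
      lra.
    + apply Hnz; auto.
  - intros H. split.
    + intros i j Hi Hj Hji Hcut.
      apply (colind_no_mult n k x (-1) i j H Hi Hj Hji ltac:(lra)).
      intros l Hl. rewrite (Hcut l Hl). ring.
    + intros i Hi c Hci Hsum j Hj.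
      assert (Hcii : c i = 0) by (apply Hci; auto).
      set (d := fun p => dot n (x i) (x p)).
      set (a := fun p => coef (d p)).
      set (S0 := sum_f_R0 (fun m => c m * a m * d m) k).
      set (c' := fun m => c m * a m + (if Nat.eq_dec m i then - S0 else 0)).
      assert (Hc' : c' j = 0).
      { apply H; auto. intros l Hl.
        transitivity (1 * sum_f_R0 (fun m => c m * a m * x m l) k
          + 1 * sum_f_R0 (fun m => if Nat.eq_dec m i then - S0 * x m l else 0) k).
        - rewrite <- sum_lin. apply sum_eq. intros p _. unfold c'.
          destruct (Nat.eq_dec p i); ring.
        - rewrite (sum_delta (fun m => - S0 * x m l)) by auto.
          rewrite <- (Hsum l Hl).
          transitivity (1 * sum_f_R0 (fun m => c m * a m * x m l) k
            + (- x i l) * S0); [ring|].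
          unfold S0. rewrite <- sum_lin. apply sum_eq. intros p Hp.
          rewrite log_eq by (apply hx; lia). fold (d p). fold (a p). ring. }
      destruct (Nat.eq_dec j i).
      * subst; auto.
      * unfold c' in Hc'. destruct (Nat.eq_dec j i); [lia|].
        assert (a j <> 0) by (apply coef_nz; apply (colind_bounds n k x hx H); auto).
        nra.
Qed.
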